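(* Let $\sigma$ be an erasing $k$-block substitution with $w_\epsilon\ne1^k$ that satisfies the optimality condition. Then there exists a Lebesgue-measurable set $\Gamma\subset\mathbb I$ (in fact of Lebesgue measure $0$) such that $f_\sigma(\Gamma)$ is not Lebesgue measurable.
   Context: Notation: $\mathbb I=[0,1]$. $\{0,1\}^*$ and $\{0,1\}^\omega$ denote finite and infinite binary words, and $\epsilon$ is the empty word. For a word $w$, set $0.w=\sum_iw_i2^{-i}$. For $x\in(0,1]$, $\widetilde x$ is the unique infinite binary expansion of $x$ not ending in $0^\infty$. Fix $k\ge2$. An erasing $k$-block substitution is a map $\sigma:\{0,1\}^k\to\{0,1\}^*$ with exactly one block $w_\epsilon$ such that $\sigma(w_\epsilon)=\epsilon$. It acts blockwise on infinite words, concatenating the images of consecutive $k$-blocks. The map $f_\sigma:\mathbb I\to\mathbb I$ is defined by $f_\sigma(x)=0.\sigma(\widetilde x)$ if $x\in(0,1]$ and $\widetilde x\neq w_\epsilon^\infty$, and $f_\sigma(x)=0$ otherwise. Optimality condition: every $w\in\{0,1\}^\omega$ can be written as $w=\prod_{i\ge1}\sigma(b_i)$ with blocks $b_i\in\{0,1\}^k$ satisfying $\sigma(b_i)\ne\epsilon$. *)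

(* Defs.v *)
From HB Require Import structures.
From mathcomp Require Import all_boot all_order all_algebra.
From mathcomp Require Import all_classical all_reals all_analysis.
Set Implicit Arguments.
Unset Strict Implicit.
Unset Printing Implicit Defensive.
Import Order.TTheory GRing.Theory Num.Theory.
Import numFieldNormedType.Exports.
Local Open Scope classical_set_scope.
Local Open Scope ring_scope.

(* Infinite binary words w = w_1 w_2 ... are functions nat -> bool,
   with the letter w_{i+1} stored at index i. Finite words are seq bool. *)

Definition fin_val (R : realType) (s : seq bool) : R :=
  \sum_(i < size s) (nth false s i)%:R / 2 ^+ i.+1.

Definition inf_val (R : realType) (w : nat -> bool) : R :=
  limn (series (fun i => (w i)%:R / 2 ^+ i.+1 : R)).

Definition not_ending_in_zeros (w : nat -> bool) : Prop :=
  forall n, exists m, (n <= m)%N /\ w m = true.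

(* x~ : the unique infinite binary expansion of x (for x in (0,1])
   not ending in 0^infinity (chosen by the choice operator [get]). *)
Definition tilde (R : realType) (x : R) : nat -> bool :=
  get (fun w : nat -> bool => inf_val R w = x /\ not_ending_in_zeros w).

Definition block (k : nat) (w : nat -> bool) (i : nat) : k.-tuple bool :=
  [tuple w (i * k + j)%N | j < k].

Definition sub_prefix (k : nat) (sigma : k.-tuple bool -> seq bool)
  (w : nat -> bool) (n : nat) : seq bool :=
  flatten [seq sigma (block k w i) | i <- iota 0 n].

(* 0.sigma(w): the value of the (finite or infinite) word
   sigma(w) = prod_i sigma(b_i), i.e. the limit of the values of its prefixes
   sigma(b_1)...sigma(b_n). *)
Definition sub_val (R : realType) (k : nat) (sigma : k.-tuple bool -> seq bool)
  (w : nat -> bool) : R :=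
  limn (fun n => fin_val R (sub_prefix sigma w n) : R).

Definition erasing_with (k : nat) (sigma : k.-tuple bool -> seq bool)
  (weps : k.-tuple bool) : Prop :=
  forall b, sigma b = [::] <-> b = weps.

(* w = weps^infinity  (k >= 1 assumed where used) *)
Definition is_power_of (k : nat) (weps : k.-tuple bool) (w : nat -> bool) : Prop :=
  forall n, w n = nth false weps (n %% k).

Definition f_sigma (R : realType) (k : nat) (sigma : k.-tuple bool -> seq bool)
  (weps : k.-tuple bool) (x : R) : R :=
  if `[< 0 < x <= 1 /\ ~ is_power_of weps (tilde x) >]
  then sub_val R sigma (tilde x) else 0.

Definition optimal (k : nat) (sigma : k.-tuple bool -> seq bool) : Prop :=
  forall w : nat -> bool, exists b : nat -> k.-tuple bool,
    (forall i, sigma (b i) <> [::]) /\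
    (forall n, let p := flatten [seq sigma (b i) | i <- iota 0 n] in
               p = [seq w j | j <- iota 0 (size p)]).

(* Lebesgue measurability = measurability for the completed Lebesgue measure *)
Definition lebesgue_measurable (R : realType) (A : set R) : Prop :=
  @measurable _ (caratheodory_type ((@wlength R idfun)^*)%mu) A.

(* Main.v *)
Require Import Defs.
From HB Require Import structures.
From mathcomp Require Import all_boot all_order all_algebra.
From mathcomp Require Import all_classical all_reals all_analysis.
From mathcomp Require Import ring lra zify.
Import Order.TTheory GRing.Theory Num.Theory.
Import numFieldNormedType.Exports.
Local Open Scope classical_set_scope.
Local Open Scope ring_scope.
Set Implicit Arguments.
Unset Strict Implicit.
Unset Printing Implicit Defensive.

Section Bin.
Variable R : realType.

Definition bt (w : nat -> bool) (i : nat) : R := (w i)%:R / 2 ^+ i.+1.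
Definition shiftw (m : nat) (w : nat -> bool) : nat -> bool := fun i => w (i + m)%N.

Lemma bt_ge0 w i : 0 <= bt w i.
Proof. by rewrite /bt divr_ge0 // exprn_ge0. Qed.

Lemma bt_le w i : bt w i <= (2 ^+ i.+1)^-1.
Proof. by rewrite /bt ler_pdivrMr ?exprn_gt0// mulVf ?expf_neq0//; case: (w i). Qed.

Lemma series_le w n : series (bt w) n <= 1 - (2 ^+ n)^-1.
Proof.
elim: n => [|n IH]; first by rewrite /series /= big_geq // expr0 invr1 subrr.
rewrite /series /= big_nat_recr //= -/(series (bt w) n).
apply: (le_trans (lerD IH (bt_le w n))).
rewrite -addrA lerD2l exprS invfM.
have h : 0 < (2 ^+ n)^-1 :> R by rewrite invr_gt0 exprn_gt0.
lra.
Qed.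

Lemma series_nd w : nondecreasing_seq (series (bt w)).
Proof.
apply/nondecreasing_seqP => n; rewrite /series /= big_nat_recr //=.
by rewrite lerDl bt_ge0.
Qed.

Lemma series_ub w : has_ubound (range (series (bt w))).
Proof.
exists 1 => _ [n _ <-]; apply: (le_trans (series_le w n)).
by rewrite lerBlDr lerDl invr_ge0 exprn_ge0.
Qed.

Lemma inf_valE w : inf_val R w = limn (series (bt w)).
Proof. by []. Qed.

Lemma cvg_val w : series (bt w) @ \oo --> inf_val R w.
Proof.
rewrite inf_valE; exact: (nondecreasing_is_cvgn (series_nd w) (series_ub w)).
Qed.

Lemma le_val w n : series (bt w) n <= inf_val R w.
Proof.
rewrite inf_valE; apply: nondecreasing_cvgn_le; first exact: series_nd.
exact: (nondecreasing_is_cvgn (series_nd w) (series_ub w)).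
Qed.

Lemma val_le1 w : inf_val R w <= 1.
Proof.
rewrite inf_valE; apply: limr_le; first exact: (nondecreasing_is_cvgn (series_nd w) (series_ub w)).
near=> n; apply: (le_trans (series_le w n)).
by rewrite lerBlDr lerDl invr_ge0 exprn_ge0.
Unshelve. all: by end_near.
Qed.

Lemma val_ge0 w : 0 <= inf_val R w.
Proof. apply: le_trans (le_val w 0); by rewrite /series /= big_geq. Qed.

Lemma val_rec w : inf_val R w = bt w 0 + inf_val R (shiftw 1 w) / 2.
Proof.
have h1 : (fun n => series (bt w) n.+1) @ \oo --> (bt w 0 + inf_val R (shiftw 1 w) / 2).
  have -> : (fun n => series (bt w) n.+1) = (fun n => bt w 0 + series (bt (shiftw 1 w)) n / 2).
    apply/funext => n; rewrite /series /= big_nat_recl //; congr (_ + _).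
    rewrite big_distrl /=; apply: eq_bigr => i _.
    rewrite /bt /shiftw addn1 exprS invfM; field; rewrite expf_neq0 // pnatr_eq0.
  have hc := @cvgMr_tmp _ _ _ _ _ _ (2^-1 : R) (@cvg_val (shiftw 1 w)).
  have hd := cvgD (cvg_cst (bt w 0)) (hc _).
  have he := hd eventually_filter eventually_filter eventually_filter. exact he.
have h2 := h1; rewrite cvg_shiftS in h2.
by rewrite inf_valE (cvg_lim _ h2).
Qed.


Lemma shiftw0 w : shiftw 0 w = w.
Proof. by apply/funext => i; rewrite /shiftw addn0. Qed.

Lemma shiftwS m w : shiftw 1 (shiftw m w) = shiftw m.+1 w.
Proof. by apply/funext => i; rewrite /shiftw -addnA add1n addnS. Qed.

Lemma seriesS (u : nat -> R) n : series u n.+1 = series u n + u n.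
Proof. by rewrite /series /= big_nat_recr. Qed.

Lemma series0 (u : nat -> R) : series u 0 = 0.
Proof. by rewrite /series /= big_geq. Qed.

Lemma val_shift w m : inf_val R w = series (bt w) m + inf_val R (shiftw m w) / 2 ^+ m.
Proof.
elim: m => [|m IH]; first by rewrite series0 shiftw0 expr0 divr1 add0r.
rewrite IH (val_rec (shiftw m w)) shiftwS seriesS /bt /shiftw add0n expr1 exprS.
field; rewrite expf_neq0 // pnatr_eq0 //.
Qed.

Lemma val_pos (w : nat -> bool) n : w n -> 0 < inf_val R w.
Proof.
move=> wn; apply: lt_le_trans (le_val w n.+1).
rewrite seriesS; have := series_nd w (leq0n n); rewrite series0 => h.
have : 0 < bt w n by rewrite /bt wn mul1r invr_gt0 exprn_gt0.
lra.
Qed.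

Lemma nez_shift w m : not_ending_in_zeros w -> not_ending_in_zeros (shiftw m w).
Proof.
move=> h n; have [j [hj wj]] := h (n + m)%N.
exists (j - m)%N; split; first by rewrite leq_subRL ?(leq_trans (leq_addl _ _) hj) // addnC.
by rewrite /shiftw subnK // (leq_trans (leq_addl _ _) hj).
Qed.

Lemma nez_val_pos w : not_ending_in_zeros w -> 0 < inf_val R w.
Proof. by move=> h; have [j [_ wj]] := h 0%N; exact: val_pos wj. Qed.

Lemma val_head_eq u v : not_ending_in_zeros u -> not_ending_in_zeros v ->
  inf_val R u = inf_val R v -> u 0%N = v 0%N.
Proof.
have key : forall u v, not_ending_in_zeros v -> u 0%N = false -> v 0%N = true ->
    inf_val R u < inf_val R v.
  move=> u' v' hv u0 v0; rewrite (val_rec u') (val_rec v') /bt u0 v0 /= mul0r add0r mul1r expr1.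
  have h1 := val_le1 (shiftw 1 u'); have h2 := nez_val_pos (@nez_shift v' 1 hv).
  lra.
move=> hu hv e; case hu0: (u 0%N); case hv0: (v 0%N) => //.
  by have := key v u hu hv0 hu0; rewrite e ltxx.
by have := key u v hv hu0 hv0; rewrite e ltxx.
Qed.

Lemma valw_inj u v : not_ending_in_zeros u -> not_ending_in_zeros v ->
  inf_val R u = inf_val R v -> u = v.
Proof.
move=> hu hv e; apply/funext => n; elim: n u v hu hv e => [|n IH] u v hu hv e.
  exact: val_head_eq.
have h0 := val_head_eq hu hv e.
have e' : inf_val R (shiftw 1 u) = inf_val R (shiftw 1 v).
  move: e; rewrite (val_rec u) (val_rec v) /bt h0 => e; lra.
have := IH _ _ (nez_shift 1 hu) (nez_shift 1 hv) e'.
by rewrite /shiftw addn1.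
Qed.

Lemma fin_val_prefix w L : fin_val R [seq w j | j <- iota 0 L] = series (bt w) L.
Proof.
rewrite /fin_val size_map size_iota /series /= big_mkord; apply: eq_bigr => i _.
by rewrite /bt (nth_map 0%N) ?size_iota // nth_iota.
Qed.

End Bin.

Section Expansion.
Variable R : realType.

Lemma pow2_small (e : R) : 0 < e -> exists n, (2 ^+ n)^-1 < e.
Proof.
move=> e0; have [n hn] : exists n : nat, e^-1 < n%:R.
  exists (Num.bound (e^-1)); apply: archi_boundP; by rewrite invr_ge0 ltW.
exists n; rewrite -(invrK e) ltf_pV2 ?posrE ?exprn_gt0 ?invr_gt0 //.
apply: (lt_le_trans hn); rewrite -natrX ler_nat; exact/ltnW/ltn_expl.
Qed.

Fixpoint remd (y : R) (n : nat) : R :=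
  match n with
  | 0 => y
  | n'.+1 => if (2 ^+ n'.+1)^-1 < remd y n' then remd y n' - (2 ^+ n'.+1)^-1 else remd y n'
  end.

Definition digits (y : R) (n : nat) : bool := (2 ^+ n.+1)^-1 < remd y n.

Lemma rem_inv y n : 0 < y <= 1 -> 0 < remd y n <= (2 ^+ n)^-1.
Proof.
move=> hy; elim: n => [|n IH] /=; first by rewrite expr0 invr1.
have e : (2 ^+ n.+1)^-1 = (2 ^+ n)^-1 / 2 :> R by rewrite exprS invfM mulrC.
case: ifP => h; rewrite e in h *; lra.
Qed.

Lemma rem_eq y n : remd y n = y - series (bt R (digits y)) n.
Proof.
elim: n => [|n IH] /=; first by rewrite series0 subr0.
rewrite seriesS /bt /digits; case: ifP => h; rewrite IH /=; lra.
Qed.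

Lemma digits_val y : 0 < y <= 1 -> inf_val R (digits y) = y.
Proof.
move=> hy; apply/eqP; rewrite eq_le; apply/andP; split.
  rewrite inf_valE; apply: limr_le; first exact: (nondecreasing_is_cvgn (@series_nd R (digits y)) (@series_ub R (digits y))).
  near=> n; have := rem_eq y n; have := rem_inv n hy; lra.
rewrite leNgt; apply/negP => h.
have [n hn] := @pow2_small (y - inf_val R (digits y)) ltac:(lra).
have := @le_val R (digits y) n; have := rem_eq y n; have := rem_inv n hy; lra.
Unshelve. all: by end_near.
Qed.

Lemma digits_nez y : 0 < y <= 1 -> not_ending_in_zeros (digits y).
Proof.
move=> hy n; apply: contrapT => hno.
have hz : forall j, digits y (n + j)%N = false.
  move=> j; apply/negP => hj; apply: hno; exists (n + j)%N; split => //; exact: leq_addr.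
have hc : forall j, remd y (n + j)%N = remd y n.
  elim=> [|j IH]; first by rewrite addn0.
  by rewrite addnS /=; move: (hz j); rewrite /digits => ->.
have [p hp] := @pow2_small (remd y n) (proj1 (andP (rem_inv n hy))).
have := rem_inv (n + p)%N hy; rewrite hc => /andP [_ h].
have : (2 ^+ (n + p))^-1 <= (2 ^+ p)^-1 :> R.
  by rewrite lef_pV2 ?posrE ?exprn_gt0 // ler_eXn2l ?ltr1n // leq_addl.
lra.
Qed.

Lemma tilde_spec y : 0 < y <= 1 -> inf_val R (tilde y) = y /\ not_ending_in_zeros (tilde y).
Proof.
move=> hy; apply: (@getPex _ (fun w => inf_val R w = y /\ not_ending_in_zeros w)).
by exists (digits y); split; [exact: digits_val|exact: digits_nez].
Qed.

Lemma tilde_val u : not_ending_in_zeros u -> tilde (inf_val R u) = u.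
Proof.
move=> hu; have hp : 0 < inf_val R u <= 1 by rewrite nez_val_pos // val_le1.
have [h1 h2] := tilde_spec hp.
exact: (valw_inj h2 hu h1).
Qed.

End Expansion.

Section Affine.
Variable R : realType.


Definition aff (c s : R) (A : set R) : set R := [set (c + s * x)%R | x in A].

Notation M := ((@wlength R idfun)^*)%mu.

Lemma aff_itv (c s a b : R) : (0 < s)%R ->
  aff c s `]a, b]%classic = `]c + s * a, c + s * b]%classic.
Proof.
move=> s0; apply/seteqP; split => y.
  case=> x /= hx <-; move: hx; rewrite /= !in_itv /= => /andP [h1 h2].
  by rewrite ltrD2l lerD2l ltr_pM2l // ler_pM2l // h1 h2.
rewrite /= in_itv /= => /andP [h1 h2]; exists ((y - c) / s)%R.
  rewrite /= in_itv /=; apply/andP; split.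
    by rewrite ltr_pdivlMr // ltrBrDl [a * s]mulrC.
  by rewrite ler_pdivrMr // lerBlDl [b * s]mulrC.
by rewrite mulrC divfK ?gt_eqF // addrC subrK.
Qed.

Lemma aff_ocitv (c s : R) (X : set (ocitv_type R)) : (0 < s)%R -> ocitv X ->
  ocitv (aff c s X) /\ wlength idfun (aff c s X) = (s%:E * wlength idfun X)%E.
Proof.
move=> s0 /ocitvP [->|[[a b] /= ab ->]].
  by rewrite /aff image_set0 wlength0 mule0; split => //; exact: ocitv0.
rewrite aff_itv //; split; first exact: is_ocitv.
have hab : (c + s * a <= c + s * b)%R by rewrite lerD2l ler_pM2l // ltW.
rewrite !wlength_itv_bnd ?(ltW ab) //.
by rewrite /= -EFinM; congr (_%:E); ring.
Qed.


Lemma mu_ext_aff_le (c s : R) (A : set R) : (0 < s)%R ->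
  (M (aff c s A) <= s%:E * M A)%E.
Proof.
move=> s0; rewrite /mu_ext -ereal_inf_pZl //; apply: ereal_inf_le_tmp.
move=> _ [_ [F [mF AF] <-] <-].
exists (fun k => aff c s (F k)).
  split.
    by move=> i; have [h _] := aff_ocitv c s0 (mF i); exact: h.
  move=> _ [x Ax <-]; have [i _ Fix] := AF x Ax.
  by exists i => //; exists x.
rewrite -nneseriesZl; last by move=> i _; exact: wlength_ge0.
apply: eq_eseriesr => i _; have [_ h] := aff_ocitv c s0 (mF i); exact: h.
Qed.


Lemma Mle (A B : set R) : A `<=` B -> (M A <= M B)%E.
Proof. exact: (le_mu_ext (@wlength R idfun)). Qed.

Lemma Mge0 (A : set R) : (0 <= M A)%E.
Proof. by apply: mu_ext_ge0 => X; exact: wlength_ge0. Qed.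

Definition trs (t : R) (A : set R) : set R := [set y | A (y - t)%R].

Lemma trs_aff t A : trs t A = aff t 1 A.
Proof.
apply/seteqP; split => y.
  by rewrite /trs /= => h; exists (y - t)%R => //; rewrite mul1r addrC subrK.
by case=> x Ax <-; rewrite /trs /= mul1r addrAC subrr add0r.
Qed.

Lemma trsK t A : trs (- t) (trs t A) = A.
Proof. by apply/seteqP; split => y; rewrite /trs /= opprK addrK. Qed.

Lemma mu_ext_trs t A : M (trs t A) = M A.
Proof.
apply/eqP; rewrite eq_le; apply/andP; split.
  by rewrite trs_aff; have := @mu_ext_aff_le t 1 A ltr01; rewrite mul1e.
rewrite -{1}(trsK t A) trs_aff.
by have := @mu_ext_aff_le (- t) 1 (trs t A) ltr01; rewrite mul1e.
Qed.

Lemma carath_trs t A : M.-caratheodory A -> M.-caratheodory (trs t A).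
Proof.
move=> hA X.
have e1 : X `&` trs t A = trs t (trs (- t) X `&` A).
  by apply/seteqP; split => y; rewrite /trs /= opprK subrK.
have e2 : X `&` ~` trs t A = trs t (trs (- t) X `&` ~` A).
  by apply/seteqP; split => y; rewrite /trs /= opprK subrK.
rewrite e1 e2 !mu_ext_trs -(mu_ext_trs (- t) X); exact: hA.
Qed.

End Affine.

Section Vitali.
Variable R : realType.
Notation M := ((@wlength R idfun)^*)%mu.

Definition rational (x : R) := exists q : rat, x = ratr q.

Lemma ratD x y : rational x -> rational y -> rational (x + y).
Proof. by move=> [p ->] [q ->]; exists (p + q); rewrite rmorphD. Qed.

Lemma ratN x : rational x -> rational (- x).
Proof. by move=> [p ->]; exists (- p); rewrite rmorphN. Qed.

Lemma ratB x y : rational x -> rational y -> rational (x - y).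
Proof. by move=> hx hy; apply: ratD hx (ratN hy). Qed.

Definition vrep (y : R) : R := get (fun z : R => 0 < z <= 1 /\ rational (z - y)).

Lemma vrep_spec y : 0 < vrep y <= 1 /\ rational (vrep y - y).
Proof.
apply: (@getPex _ (fun z : R => 0 < z <= 1 /\ rational (z - y))).
exists (y - ((Num.ceil y)%:~R - 1)); split.
  by have := ceil_itv y; rewrite intrD /= => /andP [h1 h2]; apply/andP; split; lra.
exists (- ((Num.ceil y) - 1)%:~R)%R; rewrite rmorphN rmorph_int intrD /=; lra.
Qed.

Lemma vrep_eq y y' : rational (y - y') -> vrep y = vrep y'.
Proof.
move=> h; rewrite /vrep; congr get; apply/funext => z; apply/propext; split.
  move=> [hz hr]; split => //; have -> : z - y' = (z - y) + (y - y') by ring.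
  exact: ratD.
move=> [hz hr]; split => //; have -> : z - y = (z - y') - (y - y') by ring.
exact: ratB.
Qed.

Definition V : set R := range vrep.

Lemma V_sub : V `<=` `]0, 1]%classic.
Proof. by move=> _ [y _ <-]; rewrite /= in_itv /=; have [h _] := vrep_spec y. Qed.

Lemma V_fix v : V v -> vrep v = v.
Proof. move=> [y _ <-]; apply: vrep_eq; exact: (vrep_spec y).2. Qed.

Lemma V_diff v v' : V v -> V v' -> rational (v - v') -> v = v'.
Proof. by move=> hv hv' h; rewrite -(V_fix hv) -(V_fix hv'); apply: vrep_eq. Qed.


Lemma M_oc (a b : R) : a <= b -> M `]a, b]%classic = (b - a)%:E.
Proof.
move=> ab; rewrite (@measurable_mu_extE _ _ _ (@wlength R idfun) `]a, b]%classic).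
  exact: wlength_itv_bnd.
exact: is_ocitv.
Qed.

Lemma mu_ext_add (B C : set R) : M.-caratheodory C -> B `&` C = set0 ->
  M (B `|` C) = (M B + M C)%E.
Proof.
move=> hC hBC; rewrite (hC (B `|` C)).
have -> : (B `|` C) `&` C = C by apply/seteqP; split => x /=; [case|move=> h; split => //; right].
have -> : (B `|` C) `&` ~` C = B.
  apply/seteqP; split => x /=; first by case=> -[].
  move=> h; split; first by left.
  by move=> hc; have : (B `&` C) x by []; rewrite hBC.
by rewrite addeC.
Qed.

Definition tq (i : nat) : R := (i.+1%:R)^-1.

Lemma tq_rat i : rational (tq i).
Proof. by exists ((i.+1%:R)^-1); rewrite fmorphV /= ratr_nat. Qed.

Lemma tq_inj i j : tq i = tq j -> i = j.
Proof. by move/invr_inj/eqP; rewrite eqr_nat => /eqP []. Qed.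

Lemma tq_itv i : 0 < tq i <= 1.
Proof.
rewrite /tq invr_gt0 ltr0Sn /= invf_le1 ?ltr0Sn //.
by rewrite -natr1 lerDr.
Qed.

Fixpoint U (n : nat) : set R :=
  if n is n'.+1 then U n' `|` trs (tq n') V else set0.

Lemma UP n y : U n y <-> exists i, (i < n)%N /\ V (y - tq i).
Proof.
elim: n => [|n IH] /=; first by split => // -[i []].
split.
  case=> [/IH [i [hi hv]]|hv]; first by exists i; split => //; exact: ltnW.
  by exists n; split.
move=> [i [hi hv]]; rewrite ltnS leq_eqVlt in hi; case/orP: hi => [/eqP e|hi]; first by subst i; right.
by left; apply/IH; exists i.
Qed.

Lemma U_sub n : U n `<=` `]0, 2]%classic.
Proof.
move=> y /UP [i [_ hv]]; have := V_sub hv; rewrite /= !in_itv /= => /andP [h1 h2].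
have := tq_itv i; move=> /andP [h3 h4]; apply/andP; split; lra.
Qed.

Hypothesis hV : M.-caratheodory V.

Lemma U_meas n : M (U n) = (n%:R%:E * M V)%E.
Proof.
elim: n => [|n IH] /=; first by rewrite mul0e mu_ext0 //; move=> ?; exact: wlength_ge0.
rewrite mu_ext_add; last 2 first.
- exact: carath_trs.
- apply/seteqP; split => // y [/UP [i [hi hv]] hv'].
  have hr : rational ((y - tq i) - (y - tq n)).
    have -> : (y - tq i) - (y - tq n) = tq n - tq i by ring.
    exact: ratB (tq_rat n) (tq_rat i).
  have e := V_diff hv hv' hr.
  have e' : tq i = tq n by apply: oppr_inj; apply: (addrI y).
  by move: hi; rewrite (tq_inj e') ltnn.
rewrite IH mu_ext_trs -natr1 EFinD ge0_muleDl ?mul1e ?lee_fin //.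
Qed.


Definition eq_ (n : nat) : R := ratr (odflt 0 (unpickle n)).

Lemma V_cover : `]0, 1]%classic `<=` \bigcup_n trs (eq_ n) V.
Proof.
move=> y _; have [_ [r hr]] := vrep_spec y.
exists (pickle (- r)) => //; rewrite /trs /= /eq_ pickleK /= rmorphN; change (V (y - - ratr r)); rewrite -hr.
have -> : y - - (vrep y - y) = vrep y by ring.
by exists y.
Qed.

Lemma V_contra : False.
Proof.
have hle : (M V <= 1%:E)%E.
  by apply: le_trans (Mle V_sub) _; rewrite M_oc ?ler01 // subr0.
have hge : (0 <= M V)%E by exact: Mge0.
have hfin : M V \is a fin_num by rewrite ge0_fin_numE // (le_lt_trans hle) ?ltry.
set m := fine (M V); have hm : M V = m%:E by rewrite fineK.
have m0 : 0 <= m by rewrite -lee_fin -hm.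
have m1 : m <= 1 by rewrite -lee_fin -hm.
case: (eqVneq m 0) => [mz|mnz].
  have := @mu_ext_sigma_subadditive _ _ _ (@wlength R idfun) (@wlength_ge0 _ idfun) (fun n => trs (eq_ n) V).
  rewrite eseries0; last by move=> i _ _; rewrite mu_ext_trs hm mz.
  move=> h; have := le_trans (Mle V_cover) h; rewrite M_oc ?ler01 // subr0 lee_fin.
  lra.
have mpos : 0 < m by rewrite lt_def mnz m0.
set n := Num.bound (2 / m).
have hn : 2 / m < n%:R by apply: archi_boundP; rewrite divr_ge0 // ler0n.
have := Mle (@U_sub n); rewrite U_meas M_oc ?ler0n // hm -EFinM lee_fin subr0 => h.
move: hn; rewrite ltr_pdivrMr // => hn; by rewrite leNgt hn in h.
Qed.

End Vitali.

Lemma V_nonmeas (R : realType) : ~ ((@wlength R idfun)^*)%mu.-caratheodory (@V R).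
Proof. move=> h; exact: V_contra h. Qed.

Section Null.
Variable R : realType.
Variable k : nat.
Variable weps : k.-tuple bool.
Notation M := ((@wlength R idfun)^*)%mu.

Definition Wd : set (nat -> bool) :=
  [set u | forall i j, (j < k)%N -> u ((2 * i + 1) * k + j)%N = nth false weps j].

Definition Nd : set R := [set inf_val R u | u in Wd].

Definition pw (f : {ffun 'I_k -> bool}) (i : nat) : bool :=
  if @insub _ _ 'I_k i is Some j then f j else nth false weps (i - k).

Definition cp (f : {ffun 'I_k -> bool}) : R := series (bt R (pw f)) (2 * k).

Definition sc : R := (2 ^+ (2 * k))^-1.

Lemma series_ext (u v : nat -> bool) n : (forall i, (i < n)%N -> u i = v i) ->
  series (bt R u) n = series (bt R v) n.
Proof.
move=> h; rewrite /series /=; apply: eq_big_nat => i /andP [_ hi].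
by rewrite /bt h.
Qed.

Lemma Wd_shift u : Wd u -> Wd (shiftw (2 * k) u).
Proof.
move=> hu i j hj; rewrite /shiftw.
have -> : ((2 * i + 1) * k + j + 2 * k = (2 * i.+1 + 1) * k + j)%N by nia.
exact: hu.
Qed.

Lemma Nd_sub x : Nd x -> exists f, aff (cp f) sc Nd x.
Proof.
move=> [u hu <-]; exists [ffun j : 'I_k => u (val j)].
exists (inf_val R (shiftw (2 * k) u)); first by exists (shiftw (2 * k) u) => //; exact: Wd_shift.
rewrite [in RHS](@val_shift R u (2 * k)) /sc mulrC; congr (_ + _).
apply: series_ext => i hi; rewrite /pw; case: insubP => [j _ ej|hn].
  by rewrite ffunE ej.
have hik : (k <= i)%N by rewrite leqNgt.
have := hu 0%N (i - k)%N ltac:(lia).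
by rewrite muln0 add0n mul1n subnKC.
Qed.


Hypothesis hk : (0 < k)%N.

Let T := {ffun 'I_k -> bool}.

Definition Fd (n : nat) : set R :=
  if @insub _ _ 'I_#|T| n is Some i then aff (cp (enum_val i)) sc Nd else set0.

Lemma Nd_big : Nd `<=` \big[setU/set0]_(i < #|T|) Fd i.
Proof.
move=> y hy; rewrite -bigcup_mkord; have [f hf] := Nd_sub hy.
exists (val (enum_rank f)); first exact: ltn_ord.
rewrite /Fd; case: insubP => [i _ ei|hn]; last by rewrite ltn_ord in hn.
have -> : i = enum_rank f by apply: val_inj.
by rewrite enum_rankK.
Qed.

Lemma Nd_le1 : Nd `<=` `]-1, 1]%classic.
Proof.
move=> _ [u _ <-]; rewrite /= in_itv /=; apply/andP; split.
  by apply: lt_le_trans (@val_ge0 R u); rewrite ltrN10.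
exact: val_le1.
Qed.

Lemma Nd_null : M Nd = 0%E.
Proof.
have hle : (M Nd <= 2%:E)%E.
  apply: le_trans (Mle Nd_le1) _; rewrite M_oc; last by lra.
  by rewrite lee_fin; lra.
have hge : (0 <= M Nd)%E by exact: Mge0.
have hfin : M Nd \is a fin_num by rewrite ge0_fin_numE // (le_lt_trans hle) ?ltry.
set x := fine (M Nd); have hx : M Nd = x%:E by rewrite fineK.
have x0 : 0 <= x by rewrite -lee_fin -hx.
have hF : forall i, (M (Fd i) <= (sc * x)%:E)%E.
  move=> i; rewrite /Fd; case: insubP => [j _ _|_].
    have sc0 : 0 < sc by rewrite /sc invr_gt0 exprn_gt0.
    by have := @mu_ext_aff_le R (cp (enum_val j)) sc Nd sc0; rewrite hx -EFinM.
  have e0 : M set0 = 0%E by apply: mu_ext0; [exact: wlength0|move=> ?; exact: wlength_ge0].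
  rewrite e0.
  by rewrite lee_fin mulr_ge0 // /sc invr_ge0 exprn_ge0.
have h1 := le_trans (Mle Nd_big) (outer_measure_subadditive M Fd #|T|).
have h2 : (\sum_(i < #|T|) M (Fd i) <= \sum_(i < #|T|) (sc * x)%:E)%E.
  by apply: lee_sum => i _; exact: hF.
have := le_trans h1 h2; rewrite sumEFin sumr_const card_ord hx lee_fin.
rewrite card_ffun card_bool card_ord -mulr_natl natrX /sc.
have -> : (2 ^+ (2 * k))^-1 = (2 ^+ k)^-1 * (2 ^+ k)^-1 :> R.
  by rewrite mul2n -addnn exprD invfM.
move=> h.
have hb0 : (2 ^+ k : R) != 0 by rewrite expf_neq0.
have e : 2 ^+ k * (2 ^- k / 2 ^+ k * x) = 2 ^- k * x :> R by field.
rewrite e in h.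
have ha : (2 ^+ k)^-1 <= 2^-1 :> R.
  rewrite lef_pV2 ?posrE ?exprn_gt0 //; rewrite -[X in X <= _]expr1.
  by rewrite ler_eXn2l ?ltr1n.
have hb : 0 <= (2 ^+ k)^-1 :> R by rewrite invr_ge0 exprn_ge0.
have : x = 0 by nra.
by move=> ->.
Qed.

End Null.

Lemma val_lim (R : realType) (w : nat -> bool) (L : nat -> nat) :
  (forall p, exists N, forall n, (N <= n)%N -> (p <= L n)%N) ->
  (fun n => series (bt R w) (L n)) @ \oo --> inf_val R w.
Proof.
move=> hL; apply/cvgrPdist_le => e e0.
have [p hp] := pow2_small e0; have [N hN] := hL p.
near=> n; have hn : (N <= n)%N by near: n; exact: nbhs_infty_ge.
have hpL := hN n hn.
have := @val_shift R w (L n); set s := series _ _; set v := inf_val _ _ => hv.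
have h1 := @val_ge0 R (shiftw (L n) w); have h2 := @val_le1 R (shiftw (L n) w).
have h3 : (2 ^+ L n)^-1 <= (2 ^+ p)^-1 :> R.
  by rewrite lef_pV2 ?posrE ?exprn_gt0 // ler_eXn2l ?ltr1n.
have h4 : 0 < (2 ^+ L n)^-1 :> R by rewrite invr_gt0 exprn_gt0.
have hd : v - s = inf_val R (shiftw (L n) w) * (2 ^+ L n)^-1 by rewrite hv; ring.
rewrite ger0_norm; last by rewrite hd mulr_ge0 // ltW.
rewrite hd; nra.
Unshelve. all: by end_near.
Qed.

Section Words.
Variable k : nat.
Hypothesis hk : (0 < k)%N.
Variable sigma : k.-tuple bool -> seq bool.
Variable weps : k.-tuple bool.
Hypothesis Herase : erasing_with sigma weps.

Definition uw (b : nat -> k.-tuple bool) (j : nat) : bool :=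
  if odd (j %/ k)%N then nth false weps (j %% k)%N else nth false (b ((j %/ k) %/ 2)%N) (j %% k)%N.

Lemma uw_idx (b : nat -> k.-tuple bool) i j : (j < k)%N ->
  uw b (i * k + j)%N = if odd i then nth false weps j else nth false (b (i %/ 2)%N) j.
Proof.
move=> hj; rewrite /uw divnMDl // divn_small // addn0 modnMDl modn_small //.
Qed.

Lemma block_uw b i : block k (uw b) i = if odd i then weps else b (i %/ 2)%N.
Proof.
apply: eq_from_tnth => j; rewrite tnth_mktuple uw_idx //.
by case: ifP => _; rewrite (tnth_nth false).
Qed.

Lemma uw_Wd b : Wd weps (uw b).
Proof.
move=> i j hj; rewrite uw_idx //.
by have -> : odd (2 * i + 1) by rewrite addn1 /= mul2n odd_double.
Qed.


Variable b : nat -> k.-tuple bool.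
Hypothesis hb : forall i, sigma (b i) <> [::].

Definition Pb m := flatten [seq sigma (b i) | i <- iota 0 m].

Lemma PbS m : Pb m.+1 = Pb m ++ sigma (b m).
Proof. by rewrite /Pb -addn1 iotaD map_cat flatten_cat /= cats0. Qed.

Lemma sub_prefix_uw n : sub_prefix sigma (uw b) n = Pb (n.+1 %/ 2)%N.
Proof.
elim: n => [|n IH]; first by [].
rewrite /sub_prefix -addn1 iotaD map_cat flatten_cat /= cats0 -/(sub_prefix sigma (uw b) n) IH.
rewrite block_uw; have e := modn2 n; case: ifP => hn; rewrite hn in e.
  have -> : ((n + 1).+1 %/ 2 = n.+1 %/ 2)%N by lia.
  have -> : sigma weps = [::] by apply/Herase.
  by rewrite cats0.
have -> : ((n + 1).+1 %/ 2 = (n.+1 %/ 2).+1)%N by lia.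
have -> : ((0 + n) %/ 2 = n.+1 %/ 2)%N by lia.
by rewrite PbS.
Qed.

Lemma size_Pb m : (m <= size (Pb m))%N.
Proof.
elim: m => [|m IH] //; rewrite PbS size_cat.
have : (0 < size (sigma (b m)))%N by rewrite lt0n size_eq0; apply/eqP; exact: hb.
lia.
Qed.

Lemma tuple_false (t : k.-tuple bool) : ~~ has id t -> val t = nseq k false.
Proof.
case: t => s /= /eqP <-; elim: s => [|x s IH] //=.
by rewrite negb_or => /andP [hx hs]; rewrite (negbTE hx) -IH.
Qed.

Lemma nez_uw : not_ending_in_zeros (uw b).
Proof.
move=> n.
have [hw|hw] := boolP (has id weps).
  have /(has_nthP false) [j hj wj] := hw.
  rewrite size_tuple in hj.
  exists ((2 * n + 1) * k + j)%N; split; first by nia.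
  by rewrite uw_idx // addn1 /= mul2n odd_double.
have hbn : has id (b n).
  apply/negPn/negP => h; case: (@hb n); apply/Herase; apply: val_inj.
  by rewrite (tuple_false h) (tuple_false hw).
have /(has_nthP false) [j hj wj] := hbn.
rewrite size_tuple in hj.
exists ((2 * n) * k + j)%N; split; first by nia.
rewrite uw_idx // mul2n odd_double /=.
by have -> : (n.*2 %/ 2 = n)%N by rewrite -mul2n mulKn.
Qed.

Lemma not_pow_uw : ~ is_power_of weps (uw b).
Proof.
move=> hp; case: (@hb 0%N); apply/Herase.
have := block_uw b 0; rewrite /= divn_small // => <-.
apply: eq_from_tnth => j; rewrite tnth_mktuple mul0n add0n hp (tnth_nth false).
by rewrite modn_small.
Qed.

End Words.

Section Main.
Variable R : realType.
Variable k : nat.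
Hypothesis hk : (2 <= k)%N.
Variable sigma : k.-tuple bool -> seq bool.
Variable weps : k.-tuple bool.
Hypothesis Herase : erasing_with sigma weps.
Hypothesis Hopt : optimal sigma.
Notation M := ((@wlength R idfun)^*)%mu.

Let hk0 : (0 < k)%N. Proof. by apply: leq_trans hk. Qed.

Definition optP (w : nat -> bool) (b : nat -> k.-tuple bool) :=
  (forall i, sigma (b i) <> [::]) /\
  (forall n, let p := flatten [seq sigma (b i) | i <- iota 0 n] in
             p = [seq w j | j <- iota 0 (size p)]).

Definition bseq (y : R) : nat -> k.-tuple bool := get (optP (tilde y)).

Lemma bseq_spec y : optP (tilde y) (bseq y).
Proof. exact: (getPex (Hopt (tilde y))). Qed.

Definition xval (y : R) : R := inf_val R (uw weps (bseq y)).

Lemma xval_nez y : not_ending_in_zeros (uw weps (bseq y)).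
Proof. by apply: nez_uw => //; exact: (bseq_spec y).1. Qed.

Lemma f_xval y : 0 < y <= 1 -> f_sigma sigma weps (xval y) = y.
Proof.
move=> hy; have [hb hp] := bseq_spec y.
have ht := (@tilde_val R _ (xval_nez y)); rewrite -/(xval y) in ht.
have hx : 0 < xval y <= 1 by rewrite nez_val_pos ?val_le1 //; exact: xval_nez.
rewrite /f_sigma asboolT; last by split => //; rewrite ht; exact: not_pow_uw.
rewrite ht /sub_val.
have -> : (fun n => fin_val R (sub_prefix sigma (uw weps (bseq y)) n)) =
    (fun n => series (bt R (tilde y)) (size (Pb sigma (bseq y) (n.+1 %/ 2)%N))).
  apply/funext => n; rewrite (sub_prefix_uw hk0 Herase) /Pb (hp (n.+1 %/ 2)%N).
  by rewrite fin_val_prefix size_map size_iota.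
have [hv _] := tilde_spec hy.
rewrite -[in RHS]hv; apply: cvg_lim => //; apply: val_lim => p.
exists (2 * p)%N => n hn; have := size_Pb hk0 hb (n.+1 %/ 2)%N; lia.
Qed.

End Main.

Unset Implicit Arguments.

Theorem mainTheorem7 (R : realType) (k : nat) (hk : (2 <= k)%N)
  (sigma : k.-tuple bool -> seq bool) (weps : k.-tuple bool)
  (Herase : erasing_with sigma weps)
  (Hweps : weps <> nseq_tuple k true)
  (Hopt : optimal sigma) :
  exists Gamma : set R,
    Gamma `<=` [set x : R | 0 <= x <= 1] /\
    lebesgue_measurable Gamma /\
    completed_lebesgue_measure Gamma = 0%E /\
    ~ lebesgue_measurable (f_sigma sigma weps @` Gamma).
Proof.
have hk0 : (0 < k)%N by apply: leq_trans hk.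
pose G : set R := [set xval sigma weps y | y in @V R].
have hGN : G `<=` Nd weps.
  move=> _ [y _ <-]; exists (uw weps (bseq sigma y)) => //; exact: uw_Wd.
have hM0 : ((@wlength R idfun)^*)%mu G = 0%E.
  apply/eqP; rewrite eq_le Mge0 andbT.
  by rewrite -(Nd_null R weps hk0); exact: Mle.
have himg : f_sigma sigma weps @` G = @V R.
  apply/seteqP; split.
    move=> _ [_ [y hy <-] <-].
    have hy' := V_sub hy; move: hy'; rewrite /= in_itv /= => hy'.
    by rewrite (f_xval hk Herase Hopt).
  move=> y hy; exists (xval sigma weps y); first by exists y.
  have hy' := V_sub hy; move: hy'; rewrite /= in_itv /= => hy'.
  exact: (f_xval hk Herase Hopt).
exists G; split.
  move=> _ [y _ <-]; rewrite /= val_ge0 val_le1 //.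
split.
  apply: le_caratheodory_measurable => X.
  have h0 : ((@wlength R idfun)^*)%mu (X `&` G) = 0%E.
    apply/eqP; rewrite eq_le Mge0 andbT -hM0; apply: Mle; exact: subIsetr.
  by rewrite /= h0 add0e; apply: Mle; exact: subIsetl.
split; first exact: hM0.
rewrite himg; exact: V_nonmeas.
Qed.
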